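(* Let $p\in\mathbb{N}$ and let $r_p$ be the maximal positive root of the equation $8r^{2p}+r^{2(p-1)}-6r^{p-1}+1=0$. Then $2r_p^{p+1}\le 1$. *)

(* Defs.v *)
From mathcomp Require Import all_boot all_order all_algebra.
From mathcomp Require Import reals.
Set Implicit Arguments. Unset Strict Implicit. Unset Printing Implicit Defensive.
Import Order.TTheory GRing.Theory Num.Theory.
Local Open Scope ring_scope.

(* q_p(r) = 8 r^(2p) + r^(2(p-1)) - 6 r^(p-1) + 1, with integer exponents
   (so that p = 0 is treated with genuine negative powers). *)
Definition rp_eq {R : realType} (p : nat) (r : R) : R :=
  8 * r ^ (2 * (p : int)) + r ^ (2 * ((p : int) - 1)) - 6 * r ^ ((p : int) - 1) + 1.

Definition is_max_pos_root {R : realType} (p : nat) (r : R) : Prop :=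
  0 < r /\ rp_eq p r = 0 /\ (forall s : R, 0 < s -> rp_eq p s = 0 -> s <= r).

(* Main.v *)
Require Import Defs.
From mathcomp Require Import all_boot all_order all_algebra.
From mathcomp Require Import reals.
From mathcomp Require Import ring lra.
Import Order.TTheory GRing.Theory Num.Theory.
Local Open Scope ring_scope.

Theorem lemma1 (R : realType) (p : nat) (r : R) :
  is_max_pos_root p r -> 2 * r ^+ p.+1 <= 1.
Proof.
move=> [r0 [h _]]; move: h; rewrite /rp_eq.
have ur : r \is a GRing.unit by rewrite unitfE gt_eqF.
set m : int := (p : int) - 1.
have e1 : 2 * (p : int) = (m + m) + 2%:Z by rewrite /m; ring.
have e2 : 2 * m = m + m by ring.
have e3 : (p.+1 : int) = m + 2%:Z by rewrite /m -addn1 PoszD; ring.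
have -> : r ^+ p.+1 = r ^ (p.+1 : int) by [].
rewrite e1 e2 e3 (exprzDr ur (m + m)) (exprzDr ur m m) (exprzDr ur m).
have x0 : 0 < r ^ m by apply: exprz_gt0.
set x := r ^ m; have -> : r ^ 2%:Z = r ^+ 2 by [].
move=> h.
have H : 0 <= x * (1 - 2 * (x * r ^+ 2)).
  have E : 4 * (x * (1 - 2 * (x * r ^+ 2))) = (x - 1) ^+ 2 - (8 * (x * x * r ^+ 2) + x * x - 6 * x + 1) by ring.
  have : 0 <= 4 * (x * (1 - 2 * (x * r ^+ 2))) by rewrite E h subr0 sqr_ge0.
  by rewrite pmulr_rge0.
rewrite -subr_ge0; by rewrite pmulr_rge0 in H.
Qed.
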